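(* Let $(X,\|\cdot\|)$ be a Banach space, $B_X=\{x\in X:\|x\|\le1\}$ and $B=\{x\in X:\|x\|\ge2\}$. Suppose the ordered pair $(B_X,B)$ has the $UC$ property. If $\{x_n\}_{n=1}^\infty,\{z_n\}_{n=1}^\infty\subset B_X$ satisfy $\lim_{n\to\infty}\left\|\frac{x_n+z_n}{2}\right\|=1$, then $\lim_{n\to\infty}\|x_n-z_n\|=0$.
   Context: $\mathrm{dist}(A,B)=\inf\{\|a-b\|:a\in A,b\in B\}$. The ordered pair $(A,B)$ has the $UC$ property if for all sequences $\{x_n\},\{z_n\}\subset A$, $\{y_n\}\subset B$ with $\lim_n\|x_n-y_n\|=\lim_n\|z_n-y_n\|=\mathrm{dist}(A,B)$ one has $\lim_n\|x_n-z_n\|=0$. *)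

(* Defs.v *)
From HB Require Import structures.
From mathcomp Require Import all_boot all_order all_algebra.
From mathcomp Require Import all_classical all_reals all_analysis.
Set Implicit Arguments. Unset Strict Implicit. Unset Printing Implicit Defensive.
Import Order.TTheory GRing.Theory Num.Theory.
Import numFieldNormedType.Exports.
Local Open Scope classical_set_scope.
Local Open Scope ring_scope.

Definition set_dist (R : realType) (X : normedModType R) (A B : set X) : R :=
  inf [set r : R | exists a b, A a /\ B b /\ r = `|a - b|].

Definition UC_property (R : realType) (X : normedModType R) (A B : set X) : Prop :=
  forall (x z y : nat -> X),
    (forall n, A (x n)) -> (forall n, A (z n)) -> (forall n, B (y n)) ->
    (fun n => `|x n - y n|) @ \oo --> set_dist A B ->
    (fun n => `|z n - y n|) @ \oo --> set_dist A B ->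
    (fun n => `|x n - z n|) @ \oo --> (0 : R).

(* Main.v *)
Require Import Defs.
From HB Require Import structures.
From mathcomp Require Import all_boot all_order all_algebra.
From mathcomp Require Import all_classical all_reals all_analysis.
From mathcomp Require Import lra.
Import Order.TTheory GRing.Theory Num.Theory.
Import numFieldNormedType.Exports.
Local Open Scope classical_set_scope.
Local Open Scope ring_scope.

Lemma bnd_aux (R : realType) (X : normedModType R) (a b : X) :
  `|a| <= 1 -> `|b| <= 1 -> 2^-1 *: (a + b) != 0 ->
  `|(2 / `|2^-1 *: (a + b)|) *: (2^-1 *: (a + b))| = 2 /\
  1 <= `|a - (2 / `|2^-1 *: (a + b)|) *: (2^-1 *: (a + b))| <=
     1 + `|2 * `|2^-1 *: (a + b)| - 2|.
Proof.
set w := 2^-1 *: (a + b) => ha hb w0.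
have nw0 : `|w| != 0 by rewrite normr_eq0.
have nwp : 0 < `|w| by rewrite normr_gt0.
have ny : `|(2 / `|w|) *: w| = 2.
  rewrite normrZ ger0_norm ?divr_ge0 ?normr_ge0 // -mulrA mulVf //.
  by rewrite mulr1.
split => //; apply/andP; split.
  rewrite distrC; apply: le_trans (lerB_dist _ _); rewrite ny.
  by rewrite lerBrDl -lerBrDr (le_trans ha) //; rewrite -[2]/(1+1) addrK.
have abw : a + b = 2 *: w by rewrite /w scalerA mulfV ?scale1r // pnatr_eq0.
have -> : a - (2 / `|w|) *: w = (a + b - (2 / `|w|) *: w) - b.
  by rewrite addrAC addrK.
apply: le_trans (ler_normB _ _) _.
rewrite addrC lerD //.
rewrite abw -scalerBl normrZ.
rewrite -{2}(ger0_norm (normr_ge0 w)) -normrM mulrBl -mulrA mulVf // mulr1.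
by rewrite mulrC.
Qed.

Arguments bnd_aux {R X a b}.

Theorem mainTheorem11 (R : realType) (X : completeNormedModType R) :
  UC_property [set x : X | `|x| <= 1] [set x : X | 2 <= `|x|] ->
  forall x z : nat -> X,
    (forall n, `|x n| <= 1) -> (forall n, `|z n| <= 1) ->
    (fun n => `|(2%:R : R)^-1 *: (x n + z n)|) @ \oo --> (1 : R) ->
    (fun n => `|x n - z n|) @ \oo --> (0 : R).
Proof.
move=> UC x z hx hz hw.
set w := fun n => (2%:R : R)^-1 *: (x n + z n).
have ev : \forall n \near \oo, 2^-1 < `|w n|.
  by apply: (cvgr_gt 1 hw); rewrite invf_lt1 // ltr1n.
have ev0 : \forall n \near \oo, w n != 0.
  by apply: filterS ev => n hn; rewrite -normr_gt0 (lt_trans _ hn) // invr_gt0.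
have [N _ HN] := ev0.
have wN : w N != 0 by apply: HN => /=.
pose y n := if w n == 0 then (2 / `|w N|) *: w N else (2 / `|w n|) *: w n.
have yB : forall n, 2 <= `|y n|.
  move=> n; rewrite /y; case: eqP => [_|/eqP wn].
    by have [-> _] := bnd_aux (hx N) (hz N) wN.
  by have [-> _] := bnd_aux (hx n) (hz n) wn.
have dist1 : set_dist [set x : X | `|x| <= 1] [set x : X | 2 <= `|x|] = 1.
  apply/eqP; rewrite eq_le; apply/andP; split.
    set u := `|w N|^-1 *: w N.
    have nu : `|u| = 1.
      by rewrite normrZ normfV ger0_norm ?normr_ge0 // mulVf // normr_eq0.
    have e1 : `|u - 2 *: u| = 1.
      rewrite -{1}(scale1r u) -scalerBl normrZ nu mulr1.
      have -> : 1 - 2 = - 1 :> R by lra.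
      by rewrite normrN normr1.
    rewrite -[X in _ <= X]e1; apply: ge_inf.
      exists 0 => r [a [b [ha [hb ->]]]]; exact: normr_ge0.
    exists u, (2 *: u); split; first by rewrite /= nu.
    by rewrite /= normrZ nu mulr1 ger0_norm.
  apply: lb_le_inf.
    exists `|x N - y N|, (x N), (y N); split; first exact: hx.
    by split; first exact: yB.
  move=> r [a [b [ha [hb ->]]]]; rewrite distrC.
  apply: le_trans (lerB_dist _ _); move: ha hb => /= ha hb; lra.
have hlim : (fun n => 1 + `|2 * `|w n| - 2|) @ \oo --> (1 : R).
  have H := cvgD (cvg_cst (1:R)) (cvg_norm (cvgB (cvgMl_tmp (a:=2) hw) (cvg_cst (2:R)))).
  rewrite mulr1 subrr normr0 addr0 in H; apply: H.
have ey : forall n, (N <= n)%N -> y n = (2 / `|w n|) *: w n.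
  by move=> n Nn; rewrite /y (negbTE (HN n Nn)).
apply: (UC x z y hx hz yB); rewrite dist1.
  apply: (squeeze_cvgr _ (cvg_cst (1:R)) hlim).
  exists N => // n /= Nn; rewrite ey //.
  by have [_ ->] := bnd_aux (hx n) (hz n) (HN n Nn).
apply: (squeeze_cvgr _ (cvg_cst (1:R)) hlim).
exists N => // n /= Nn; rewrite ey //.
have := HN n Nn; rewrite /w addrC => wn.
by have [_ ->] := bnd_aux (hz n) (hx n) wn.
Qed.
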